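(* Assume $p$ is unbounded. Then for every fixed $n\ge 0$, as $r\to\infty$, $$\mathbf{P}\big[M_{[0,n]}=r\big]\sim (1+\mu+\cdots+\mu^n)\,p_r\quad\text{and}\quad \mathbf{P}\big[M_{[0,n]}>r\big]\sim(1+\mu+\cdots+\mu^n)\,\bar F(r),$$ where the first asymptotic equivalence is understood along the infinite set $\{r:p_r>0\}$.
   Context: Let $p=(p_0,p_1,p_2,\dots)$ be a probability distribution on the nonnegative integers with mean $\mu=\sum_k kp_k\in(0,\infty)$, and let $\tau(p)$ be a Galton–Watson tree with offspring distribution $p$: it starts with a single root at generation $0$, and every vertex independently has $k$ children with probability $p_k$. The out-degree of a vertex is its number of children. $M_n$ denotes the maximal out-degree among the vertices of generation $n$ (with $M_n=0$ if generation $n$ is empty), and $M_{[0,n]}=\max_{0\le i\le n}M_i$ (the local maximal out-degree over the first $n+1$ generations). $\bar F(r)=\sum_{k>r}p_k$. The distribution $p$ is called unbounded if the set $\{r:p_r>0\}$ is unbounded. *)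

(* Defs.v *)
From Stdlib Require Import Reals List Lra.
Import ListNotations.
Open Scope R_scope.

Definition is_distribution (p : nat -> R) : Prop :=
  (forall k, 0 <= p k) /\ infinite_sum p 1.

Definition has_mean (p : nat -> R) (mu : R) : Prop :=
  infinite_sum (fun k => INR k * p k) mu.

Definition unbounded (p : nat -> R) : Prop :=
  forall N : nat, exists r : nat, (N <= r)%nat /\ 0 < p r.

(* Fbar(r) = sum_{k>r} p_k  (= 1 - sum_{k<=r} p_k for a distribution). *)
Definition Fbar (p : nat -> R) (r : nat) : R := 1 - sum_f_R0 p r.

Inductive ptree : Type := PNode : list ptree -> ptree.

Fixpoint tuples {A : Type} (k : nat) (l : list A) : list (list A) :=
  match k with
  | O => [[]]
  | S k' => flat_map (fun x => map (cons x) (tuples k' l)) l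
  end.

(* Outcomes of the Galton-Watson tree observed up to the out-degrees of the
   first m generations, i.e. the tree truncated at generation m (vertices of
   generation m carry no recorded children), restricted to those in which all
   observed out-degrees are <= r. *)
Fixpoint outcomes_le (m r : nat) : list ptree :=
  match m with
  | O => [PNode []]
  | S m' => flat_map (fun k => map PNode (tuples k (outcomes_le m' r)))
                     (seq 0 (S r))
  end.

Fixpoint weight (p : nat -> R) (m : nat) (t : ptree) : R :=
  match m with
  | O => 1
  | S m' => match t with
            | PNode ts => p (length ts) * fold_right Rmult 1 (map (weight p m') ts)
            end
  end.

(* P[ M_{[0,n]} <= r ]: sum of the probabilities of all outcomes (tree up to
   generation n+1) where every vertex of generations 0..n has out-degree <= r. *)
Definition P_Mle (p : nat -> R) (n r : nat) : R :=
  fold_right Rplus 0 (map (weight p (S n)) (outcomes_le (S n) r)).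

Definition P_Meq (p : nat -> R) (n r : nat) : R :=
  P_Mle p n r - match r with O => 0 | S r' => P_Mle p n r' end.

Definition P_Mgt (p : nat -> R) (n r : nat) : R := 1 - P_Mle p n r.

(* Main.v *)
Require Import Defs.
From Stdlib Require Import Reals List Lra Lia.
Import ListNotations.
Open Scope R_scope.


Definition sumL (l : list R) : R := fold_right Rplus 0 l.
Definition prodL (l : list R) : R := fold_right Rmult 1 l.

Lemma sumL_app l1 l2 : sumL (l1 ++ l2) = sumL l1 + sumL l2.
Proof. induction l1; simpl; [lra|]. unfold sumL in *; simpl. rewrite IHl1; lra. Qed.

Lemma sumL_flat {A B} (w : B -> R) (f : A -> list B) l :
  sumL (map w (flat_map f l)) = sumL (map (fun x => sumL (map w (f x))) l).
Proof. induction l; simpl; auto. rewrite map_app, sumL_app, IHl. reflexivity. Qed.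

Lemma sumL_scal {A} (c : R) (f : A -> R) l :
  sumL (map (fun x => c * f x) l) = c * sumL (map f l).
Proof. induction l; unfold sumL in *; simpl; [lra|]. rewrite IHl; lra. Qed.

Lemma tuples_length {A} k (L : list A) ts : In ts (tuples k L) -> length ts = k.
Proof.
  revert ts; induction k; simpl; intros ts H.
  - destruct H as [<-|[]]; reflexivity.
  - apply in_flat_map in H. destruct H as [x [_ H]]. apply in_map_iff in H.
    destruct H as [ts' [<- H]]. simpl. rewrite (IHk _ H). reflexivity.
Qed.

Lemma tuples_sum {A} (w : A -> R) k L :
  sumL (map (fun ts => prodL (map w ts)) (tuples k L)) = (sumL (map w L)) ^ k.
Proof.
  induction k; simpl.
  - unfold sumL, prodL; simpl; lra.
  - rewrite sumL_flat.
    transitivity (sumL (map (fun x => w x * sumL (map w L) ^ k) L)).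
    + f_equal. apply map_ext. intro x. rewrite map_map.
      unfold prodL; simpl. fold prodL. rewrite sumL_scal. unfold prodL in IHk. rewrite IHk. reflexivity.
    + clear IHk. generalize (sumL (map w L) ^ k). intro c. 
      rewrite (map_ext (fun x => w x * c) (fun x => c * w x)) by (intro; ring).
      rewrite sumL_scal. ring.
Qed.

Lemma sumL_seq (f : nat -> R) r : sumL (map f (seq 0 (S r))) = sum_f_R0 f r.
Proof.
  induction r.
  - unfold sumL; simpl; lra.
  - rewrite seq_S, map_app, sumL_app, IHr. unfold sumL; simpl. lra.
Qed.

Definition G (p : nat -> R) (r : nat) (s : R) : R := sum_f_R0 (fun k => p k * s ^ k) r.
Fixpoint Q (p : nat -> R) (m r : nat) : R :=
  match m with O => 1 | S m' => G p r (Q p m' r) end.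

Lemma QL_Q p m r : sumL (map (weight p m) (outcomes_le m r)) = Q p m r.
Proof.
  induction m.
  - unfold sumL; simpl; lra.
  - change (sumL (map (weight p (S m)) (flat_map (fun k => map PNode (tuples k (outcomes_le m r))) (seq 0 (S r)))) = G p r (Q p m r)).
    rewrite sumL_flat. unfold G. rewrite <- sumL_seq. f_equal. apply map_ext. intro k.
    rewrite map_map.
    transitivity (sumL (map (fun ts => p k * prodL (map (weight p m) ts)) (tuples k (outcomes_le m r)))).
    + f_equal. apply map_ext_in. intros ts Hts. simpl. rewrite (tuples_length _ _ _ Hts). reflexivity.
    + rewrite sumL_scal, tuples_sum, IHm. reflexivity.
Qed.

Lemma P_Mle_Q p n r : P_Mle p n r = Q p (S n) r.
Proof. unfold P_Mle. rewrite <- QL_Q. reflexivity. Qed.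

Lemma sum_minus' f g n : sum_f_R0 (fun k => f k - g k) n = sum_f_R0 f n - sum_f_R0 g n.
Proof. induction n; simpl; lra. Qed.

Lemma sum_scal' c f n : sum_f_R0 (fun k => c * f k) n = c * sum_f_R0 f n.
Proof. induction n; simpl; [lra|]. rewrite IHn; ring. Qed.

Lemma sum_mono_n f K r : (forall k, 0 <= f k) -> (K <= r)%nat -> sum_f_R0 f K <= sum_f_R0 f r.
Proof.
  intros Hf HK. induction HK; [lra|]. simpl. specialize (Hf (S m)). lra.
Qed.

Lemma psum_le_lim f l : (forall k, 0 <= f k) -> infinite_sum f l -> forall r, sum_f_R0 f r <= l.
Proof.
  intros Hf Hl r. destruct (Rle_or_lt (sum_f_R0 f r) l) as [H|H]; auto.
  destruct (Hl (sum_f_R0 f r - l)) as [N HN]; [lra|].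
  specialize (HN (Nat.max N r) (Nat.le_max_l _ _)).
  assert (sum_f_R0 f r <= sum_f_R0 f (Nat.max N r)) by (apply sum_mono_n; auto; lia).
  unfold R_dist in HN. rewrite Rabs_right in HN by lra. lra.
Qed.

Lemma psum_close f l : infinite_sum f l -> forall eps, 0 < eps -> exists N, forall r, (N <= r)%nat ->
  l - sum_f_R0 f r < eps.
Proof.
  intros Hl eps He. destruct (Hl eps He) as [N HN]. exists N. intros r Hr.
  specialize (HN r Hr). unfold R_dist in HN. apply Rabs_def2 in HN. lra.
Qed.

Lemma pow_le_one x k : 0 <= x <= 1 -> x ^ k <= 1.
Proof. intros H. induction k; simpl; [lra|]. assert (0 <= x ^ k) by (apply pow_le; lra). nra. Qed.

Lemma pow_diff_up s s' k : 0 <= s' <= s -> s <= 1 -> s ^ k - s' ^ k <= INR k * (s - s').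
Proof.
  intros Hs H1. induction k; [simpl; lra|]. rewrite S_INR. change (s ^ S k) with (s * s^k). change (s' ^ S k) with (s' * s'^k).
  assert (0 <= s' ^ k <= 1) by (split; [apply pow_le; lra| apply pow_le_one; lra]).
  assert (s * s ^ k - s' * s' ^ k = s * (s ^ k - s' ^ k) + (s - s') * s' ^ k) by ring.
  assert (0 <= s ^ k - s' ^ k) by (assert (s' ^ k <= s ^ k) by (apply pow_incr; lra); lra).
  assert (s * (s ^ k - s' ^ k) <= s ^ k - s' ^ k) by nra.
  nra.
Qed.

Lemma pow_diff_lo s s' k : 0 <= s' <= s -> s <= 1 -> INR k * (s - s') * s' ^ k <= s ^ k - s' ^ k.
Proof.
  intros Hs H1. induction k; [simpl; lra|]. rewrite S_INR. change (s ^ S k) with (s * s^k). change (s' ^ S k) with (s' * s'^k).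
  assert (0 <= s' ^ k <= 1) by (split; [apply pow_le; lra| apply pow_le_one; lra]).
  assert (0 <= INR k) by apply pos_INR.
  assert (s * s ^ k - s' * s' ^ k = s * (s ^ k - s' ^ k) + (s - s') * s' ^ k) by ring.
  assert (0 <= INR k * (s - s') * s' ^ k) by (apply Rmult_le_pos; [apply Rmult_le_pos|]; lra).
  assert (s' * (INR k * (s - s') * s' ^ k) <= s * (s ^ k - s' ^ k)).
  { apply Rmult_le_compat; lra. }
  assert ((s - s') * (s' * s' ^ k) <= (s - s') * s' ^ k).
  { apply Rmult_le_compat_l; [lra|]. nra. }
  replace ((INR k + 1) * (s - s') * (s' * s' ^ k)) with (s' * (INR k * (s - s') * s' ^ k) + (s - s') * (s' * s' ^ k)) by ring.
  lra.
Qed.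

Lemma bernoulli s k : 0 <= s <= 1 -> 1 - INR k * (1 - s) <= s ^ k.
Proof.
  intros Hs. induction k; [simpl; lra|]. rewrite S_INR. change (s ^ S k) with (s * s^k).
  assert (0 <= s ^ k) by (apply pow_le; lra).
  assert (0 <= INR k) by apply pos_INR.
  assert (0 <= s * s ^ k) by (apply Rmult_le_pos; lra).
  assert (0 <= INR k * (1 - s)) by (apply Rmult_le_pos; lra).
  destruct (Rle_or_lt 0 (1 - INR k * (1 - s))).
  - assert (s * (1 - INR k * (1 - s)) <= s * s ^ k) by (apply Rmult_le_compat_l; lra).
    assert ((1 - s) * (1 - INR k * (1 - s)) <= (1 - s) * 1) by (apply Rmult_le_compat_l; lra).
    nra.
  - nra.
Qed.

Definition mup (p : nat -> R) (K : nat) := sum_f_R0 (fun k => INR k * p k) K.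

Lemma G_diff p r s s' : G p r s - G p r s' = sum_f_R0 (fun k => p k * (s ^ k - s' ^ k)) r.
Proof.
  unfold G. rewrite <- sum_minus'. apply sum_eq. intros; ring.
Qed.

Lemma lemB p mu K r s s' : (forall k, 0 <= p k) -> has_mean p mu -> (K <= r)%nat ->
  0 <= s' <= s -> s <= 1 ->
  (s - s') * (mup p K - INR K * mu * (1 - s')) <= G p r s - G p r s' <= (s - s') * mu.
Proof.
  intros Hp Hm HK Hs H1. rewrite G_diff.
  assert (HmuK : mup p K <= mu) by (apply psum_le_lim; auto; intro k; apply Rmult_le_pos; auto; apply pos_INR).
  assert (Hmur : mup p r <= mu) by (apply psum_le_lim; auto; intro k; apply Rmult_le_pos; auto; apply pos_INR).
  split.
  - apply Rle_trans with (sum_f_R0 (fun k => p k * (s ^ k - s' ^ k)) K).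
    2:{ apply sum_mono_n; auto. intro k. apply Rmult_le_pos; auto.
        assert (s' ^ k <= s ^ k) by (apply pow_incr; lra). lra. }
    apply Rle_trans with (sum_f_R0 (fun k => ((s - s') * (1 - INR K * (1 - s'))) * (INR k * p k)) K).
    + rewrite sum_scal'. unfold mup.
      assert (0 <= sum_f_R0 (fun k => INR k * p k) K).
      { apply cond_pos_sum. intro k. apply Rmult_le_pos; auto; apply pos_INR. }
      assert (0 <= INR K) by apply pos_INR.
      assert (0 <= INR K * (1 - s')) by (apply Rmult_le_pos; lra).
      unfold mup in HmuK.
      assert (INR K * (1 - s') * sum_f_R0 (fun k => INR k * p k) K <= INR K * (1 - s') * mu)
        by (apply Rmult_le_compat_l; lra).
      assert (0 <= s - s') by lra.
      apply Rmult_le_compat_l with (r := s - s') in H2; auto. nra.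
    + apply sum_Rle. intros k Hk.
      assert (Hk' : INR k <= INR K) by (apply le_INR; auto).
      assert (0 <= INR k) by apply pos_INR.
      assert (B1 := pow_diff_lo s s' k Hs H1).
      assert (B2 := bernoulli s' k ltac:(lra)).
      assert (0 <= p k) by auto.
      assert (0 <= s - s') by lra.
      assert (1 - INR K * (1 - s') <= 1 - INR k * (1 - s')) by nra.
      assert (INR k * (s - s') * (1 - INR K * (1 - s')) <= INR k * (s - s') * s' ^ k).
      { apply Rmult_le_compat_l; [apply Rmult_le_pos|]; lra. }
      assert (p k * (INR k * (s - s') * (1 - INR K * (1 - s'))) <= p k * (s ^ k - s' ^ k)).
      { apply Rmult_le_compat_l; lra. }
      nra.
  - apply Rle_trans with (sum_f_R0 (fun k => (s - s') * (INR k * p k)) r).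
    + apply sum_Rle. intros k _.
      assert (B1 := pow_diff_up s s' k Hs H1).
      assert (0 <= p k) by auto.
      assert (p k * (s ^ k - s' ^ k) <= p k * (INR k * (s - s'))) by (apply Rmult_le_compat_l; lra).
      nra.
    + rewrite sum_scal'. apply Rmult_le_compat_l; [lra|]. exact Hmur.
Qed.

Lemma G_mono p r s s' : (forall k, 0 <= p k) -> 0 <= s' <= s -> G p r s' <= G p r s.
Proof.
  intros Hp Hs. unfold G. apply sum_Rle. intros k _. apply Rmult_le_compat_l; auto.
  apply pow_incr; lra.
Qed.

Lemma G_S p r s : G p (S r) s = G p r s + p (S r) * s ^ (S r).
Proof. reflexivity. Qed.

Lemma G_range p r s : is_distribution p -> 0 <= s <= 1 -> 0 <= G p r s <= 1.
Proof.
  intros [Hp H1] Hs. split.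
  - unfold G. apply cond_pos_sum. intro k. apply Rmult_le_pos; auto. apply pow_le; lra.
  - apply Rle_trans with (sum_f_R0 p r).
    + unfold G. apply sum_Rle. intros k _. assert (s ^ k <= 1) by (apply pow_le_one; lra).
      assert (0 <= p k) by auto. nra.
    + apply psum_le_lim; auto.
Qed.

Lemma G_one p r : G p r 1 = sum_f_R0 p r.
Proof. unfold G. apply sum_eq. intros. rewrite pow1. ring. Qed.

Lemma Q_range p m r : is_distribution p -> 0 <= Q p m r <= 1.
Proof. intros Hd. induction m; simpl; [lra|]. apply G_range; auto. Qed.

Lemma Q_mono p m r : is_distribution p -> Q p m r <= Q p m (S r).
Proof.
  intros Hd. induction m; simpl; [lra|].
  destruct Hd as [Hp H1].
  rewrite G_S.
  assert (0 <= Q p m (S r)) by (apply Q_range; split; auto).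
  assert (0 <= Q p m r) by (apply Q_range; split; auto).
  assert (0 <= p (S r) * Q p m (S r) ^ S r) by (apply Rmult_le_pos; auto; apply pow_le; auto).
  assert (G p r (Q p m r) <= G p r (Q p m (S r))) by (apply G_mono; auto).
  lra.
Qed.

Lemma t_pos p r : is_distribution p -> unbounded p -> 0 < Fbar p r.
Proof.
  intros [Hp H1] Hu. destruct (Hu (S r)) as [r' [Hr' Hpr']].
  unfold Fbar.
  assert (sum_f_R0 p r' <= 1) by (apply psum_le_lim; auto).
  assert (sum_f_R0 p r + p r' <= sum_f_R0 p r').
  { destruct r' as [|r'']; [lia|]. simpl.
    assert (sum_f_R0 p r <= sum_f_R0 p r'') by (apply sum_mono_n; auto; lia). lra. }
  lra.
Qed.

Lemma t_small p : is_distribution p -> forall eps, 0 < eps -> exists N, forall r, (N <= r)%nat -> Fbar p r < eps.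
Proof. intros [Hp H1] eps He. destruct (psum_close _ _ H1 eps He) as [N HN]. exists N. intros. unfold Fbar. auto. Qed.

Lemma rt_aux p r j : (forall k, 0 <= p k) ->
  INR r * (sum_f_R0 p (r + j) - sum_f_R0 p r) <= mup p (r + j) - mup p r.
Proof.
  intros Hp. induction j.
  - rewrite Nat.add_0_r. lra.
  - rewrite Nat.add_succ_r. unfold mup in *.
    change (sum_f_R0 p (S (r + j))) with (sum_f_R0 p (r + j) + p (S (r + j))).
    change (sum_f_R0 (fun k => INR k * p k) (S (r + j))) with
      (sum_f_R0 (fun k => INR k * p k) (r + j) + INR (S (r + j)) * p (S (r + j))).
    assert (INR r <= INR (S (r + j))) by (apply le_INR; lia).
    assert (INR r * p (S (r + j)) <= INR (S (r + j)) * p (S (r + j))) by (apply Rmult_le_compat_r; auto).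
    nra.
Qed.

Lemma rt_bound p mu r : is_distribution p -> has_mean p mu -> INR r * Fbar p r <= mu - mup p r.
Proof.
  intros [Hp H1] Hm. unfold Fbar.
  destruct (Rle_or_lt (INR r * (1 - sum_f_R0 p r)) (mu - mup p r)) as [H|H]; auto.
  exfalso.
  set (eta := INR r * (1 - sum_f_R0 p r) - (mu - mup p r)).
  assert (Heta : 0 < eta) by (unfold eta; lra).
  assert (Hr : 0 <= INR r) by apply pos_INR.
  destruct (psum_close _ _ H1 (eta / (INR r + 1))) as [N HN].
  { apply Rdiv_lt_0_compat; lra. }
  specialize (HN (r + N)%nat ltac:(lia)).
  assert (A := rt_aux p r N Hp).
  assert (mup p (r + N) <= mu) by (apply psum_le_lim; auto; intro k; apply Rmult_le_pos; auto; apply pos_INR).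
  assert (INR r * (1 - sum_f_R0 p (r + N)) < eta).
  { apply Rle_lt_trans with (INR r * (eta / (INR r + 1))).
    - apply Rmult_le_compat_l; lra.
    - assert (eta / (INR r + 1) * (INR r + 1) = eta) by (field; lra). nra. }
  unfold eta in *. nra.
Qed.

Lemma muK p mu : is_distribution p -> has_mean p mu -> forall eta, 0 < eta ->
  exists K, forall r, (K <= r)%nat -> mu - mup p r < eta.
Proof. intros _ Hm eta He. exact (psum_close _ _ Hm eta He). Qed.

Lemma rt_small p mu : is_distribution p -> has_mean p mu -> forall eps, 0 < eps ->
  exists N, forall r, (N <= r)%nat -> INR r * Fbar p r < eps.
Proof.
  intros Hd Hm eps He. destruct (muK p mu Hd Hm eps He) as [K HK]. exists K. intros r Hr.
  assert (B := rt_bound p mu r Hd Hm). specialize (HK r Hr). lra.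
Qed.

Definition cc (mu : R) (m : nat) := sum_f_R0 (fun i => mu ^ i) m.

Lemma cc_S mu m : cc mu (S m) = 1 + mu * cc mu m.
Proof.
  unfold cc. induction m.
  - simpl. ring.
  - change (sum_f_R0 (fun i => mu ^ i) (S (S m))) with (sum_f_R0 (fun i => mu ^ i) (S m) + mu ^ (S (S m))).
    remember (sum_f_R0 (fun i => mu ^ i) (S m)) as X.
    change (sum_f_R0 (fun i => mu ^ i) (S m)) with (sum_f_R0 (fun i => mu ^ i) m + mu ^ (S m)) in HeqX.
    rewrite HeqX in IHm |- *. simpl in *. nra.
Qed.

Lemma cc_pos mu m : 0 < mu -> 1 <= cc mu m.
Proof.
  intros H. induction m.
  - unfold cc; simpl; lra.
  - rewrite cc_S. assert (0 <= mu * cc mu m) by (apply Rmult_le_pos; lra). lra.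
Qed.

Lemma t_nonneg p r : is_distribution p -> 0 <= Fbar p r.
Proof. intros [Hp H1]. unfold Fbar. assert (sum_f_R0 p r <= 1) by (apply psum_le_lim; auto). lra. Qed.

Lemma Rabs_inv2 a b : Rabs a <= b -> - b <= a <= b.
Proof. intros H. assert (a <= Rabs a) by apply Rle_abs. assert (- a <= Rabs (- a)) by apply Rle_abs.
  rewrite Rabs_Ropp in H1. lra. Qed.

Lemma claim2 p mu m : is_distribution p -> has_mean p mu -> 0 < mu ->
  forall eps, 0 < eps -> exists N, forall r, (N <= r)%nat ->
  Rabs (1 - Q p (S m) r - cc mu m * Fbar p r) <= eps * Fbar p r.
Proof.
  intros Hd Hm Hmu. induction m; intros eps He.
  - exists O. intros r _. simpl Q. rewrite G_one. unfold cc. simpl. unfold Fbar.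
    replace (1 - sum_f_R0 p r - 1 * (1 - sum_f_R0 p r)) with 0 by ring.
    rewrite Rabs_R0. assert (T := t_nonneg p r Hd). unfold Fbar in T. nra.
  - set (cm := cc mu m). assert (Hcm : 1 <= cm) by (apply cc_pos; auto).
    set (C := cm + 1).
    set (e1 := Rmin 1 (eps / (2 * (mu + 1)))).
    assert (He1 : 0 < e1).
    { unfold e1. apply Rmin_glb_lt; [lra|]. apply Rdiv_lt_0_compat; lra. }
    destruct (IHm e1 He1) as [N1 HN1].
    set (eta := eps / (4 * C)).
    assert (Heta : 0 < eta) by (unfold eta, C; apply Rdiv_lt_0_compat; lra).
    destruct (muK p mu Hd Hm eta Heta) as [K HK].
    assert (HKpos : 0 <= INR K) by apply pos_INR.
    set (dl := eta / ((INR K * mu + 1) * C)).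
    assert (Hdl : 0 < dl).
    { unfold dl, C. apply Rdiv_lt_0_compat; [lra|].
      assert (0 <= INR K * mu) by (apply Rmult_le_pos; lra). apply Rmult_lt_0_compat; lra. }
    destruct (t_small p Hd dl Hdl) as [N3 HN3].
    exists (Nat.max N1 (Nat.max K N3)). intros r Hr.
    specialize (HN1 r ltac:(lia)). specialize (HN3 r ltac:(lia)).
    assert (HmuK := HK K (le_n K)).
    rewrite cc_S. fold cm in HN1 |- *.
    set (t := Fbar p r) in *.
    assert (Ht : 0 <= t) by (apply t_nonneg; auto).
    set (s := Q p (S m) r) in *.
    assert (Hs : 0 <= s <= 1) by (apply Q_range; auto).
    change (Q p (S (S m)) r) with (G p r s).
    assert (E1 : 1 - G p r 1 = t) by (rewrite G_one; reflexivity).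
    assert (LB := lemB p mu K r 1 s (proj1 Hd) Hm ltac:(lia) ltac:(lra) ltac:(lra)).
    set (X := G p r 1 - G p r s) in *.
    set (u := 1 - s) in *.
    assert (Hu0 : 0 <= u) by (unfold u; lra).
    assert (Hiu : Rabs (u - cm * t) <= e1 * t) by (unfold u; exact HN1).
    assert (He1le : e1 <= 1) by (unfold e1; apply Rmin_l).
    assert (He1le2 : e1 <= eps / (2 * (mu + 1))) by (unfold e1; apply Rmin_r).
    assert (HuC : u <= C * t).
    { apply Rabs_inv2 in Hiu. unfold C. nra. }
    assert (HKu : INR K * mu * u <= eta).
    { assert (INR K * mu * u <= INR K * mu * (C * t)).
      { apply Rmult_le_compat_l; [apply Rmult_le_pos|]; lra. }
      assert (C * t <= C * dl) by (apply Rmult_le_compat_l; unfold C; lra).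
      assert (HCdl : C * dl = eta / (INR K * mu + 1)).
      { unfold dl. field. split; unfold C; try lra. assert (0 <= INR K * mu) by (apply Rmult_le_pos; lra). lra. }
      assert (INR K * mu * (eta / (INR K * mu + 1)) <= eta).
      { assert (0 <= INR K * mu) by (apply Rmult_le_pos; lra).
        replace (INR K * mu * (eta / (INR K * mu + 1))) with (eta * (INR K * mu / (INR K * mu + 1))) by (field; lra).
        assert (INR K * mu / (INR K * mu + 1) <= 1).
        { apply Rmult_le_reg_r with (INR K * mu + 1); [lra|]. unfold Rdiv. rewrite Rmult_assoc, Rinv_l by lra. lra. }
        nra. }
      assert (0 <= INR K * mu) by (apply Rmult_le_pos; lra).
      assert (HH : INR K * mu * (C * t) <= INR K * mu * (C * dl)) by (apply Rmult_le_compat_l; lra).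
      rewrite HCdl in HH. lra. }
    assert (HX : Rabs (X - mu * u) <= 2 * eta * u).
    { replace (1 - s) with u in LB by reflexivity.
      apply Rabs_le. split.
      - assert (u * (mu - eta - INR K * mu * u) <= u * (mup p K - INR K * mu * u)).
        { apply Rmult_le_compat_l; lra. }
        assert (u * (INR K * mu * u) <= u * eta) by (apply Rmult_le_compat_l; lra).
        nra.
      - assert (0 <= eta * u) by (apply Rmult_le_pos; lra). nra. }
    replace (1 - G p r s - (1 + mu * cm) * t) with ((X - mu * u) + mu * (u - cm * t)).
    2:{ unfold X, u. rewrite <- E1. ring. }
    eapply Rle_trans; [apply Rabs_triang|].
    rewrite Rabs_mult, (Rabs_right mu) by lra.
    assert (mu * Rabs (u - cm * t) <= mu * (e1 * t)) by (apply Rmult_le_compat_l; lra).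
    assert (mu * (e1 * t) <= eps / 2 * t).
    { assert (mu * e1 <= eps / 2).
      { apply Rle_trans with (mu * (eps / (2 * (mu + 1)))). apply Rmult_le_compat_l; lra.
        replace (mu * (eps / (2 * (mu + 1)))) with (eps / 2 * (mu / (mu + 1))) by (field; lra).
        assert (mu / (mu + 1) <= 1).
        { apply Rmult_le_reg_r with (mu + 1); [lra|]. unfold Rdiv. rewrite Rmult_assoc, Rinv_l by lra. lra. }
        nra. }
      nra. }
    assert (2 * eta * u <= eps / 2 * t).
    { assert (2 * eta * u <= 2 * eta * (C * t)) by (apply Rmult_le_compat_l; lra).
      replace (2 * eta * (C * t)) with (eps / 2 * t) in H1 by (unfold eta; field; unfold C; lra).
      lra. }
    lra.
Qed.

Lemma small_prod a b c : 0 <= a -> 0 < c -> a * (b / ((a + 1) * c)) * c <= b -> True.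
Proof. auto. Qed.

Lemma frac_le1 a : 0 <= a -> a / (a + 1) <= 1.
Proof. intros. apply Rmult_le_reg_r with (a + 1); [lra|]. unfold Rdiv. rewrite Rmult_assoc, Rinv_l by lra. lra. Qed.

Lemma claim1 p mu m : is_distribution p -> has_mean p mu -> 0 < mu ->
  forall eps, 0 < eps -> exists N, forall r, (N <= r)%nat -> 0 < p (S r) ->
  Rabs (Q p (S m) (S r) - Q p (S m) r - cc mu m * p (S r)) <= eps * p (S r).
Proof.
  intros Hd Hm Hmu. induction m; intros eps He.
  - exists O. intros r _ Hpr. change (Q p 1 (S r)) with (G p (S r) 1). change (Q p 1 r) with (G p r 1).
    rewrite G_S, pow1. unfold cc. simpl.
    replace (G p r 1 + p (S r) * 1 - G p r 1 - 1 * p (S r)) with 0 by ring.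
    rewrite Rabs_R0. nra.
  - set (cm := cc mu m). assert (Hcm : 1 <= cm) by (apply cc_pos; auto).
    set (C := cm + 1).
    assert (HC : 1 < C) by (unfold C; lra).
    set (e1 := Rmin 1 (eps / (3 * (mu + 1)))).
    assert (He1 : 0 < e1).
    { unfold e1. apply Rmin_glb_lt; [lra|]. apply Rdiv_lt_0_compat; lra. }
    assert (He1le : e1 <= 1) by (unfold e1; apply Rmin_l).
    assert (He1le2 : e1 <= eps / (3 * (mu + 1))) by (unfold e1; apply Rmin_r).
    destruct (IHm e1 He1) as [N1 HN1].
    destruct (claim2 p mu m Hd Hm Hmu 1 ltac:(lra)) as [N2 HN2].
    set (eta := eps / (6 * C)).
    assert (Heta : 0 < eta) by (unfold eta, C; apply Rdiv_lt_0_compat; lra).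
    destruct (muK p mu Hd Hm eta Heta) as [K HK].
    assert (HKpos : 0 <= INR K) by apply pos_INR.
    assert (HKmu : 0 <= INR K * mu) by (apply Rmult_le_pos; lra).
    set (dl := eta / ((INR K * mu + 1) * C)).
    assert (Hdl : 0 < dl).
    { unfold dl, C. apply Rdiv_lt_0_compat; [lra|]. apply Rmult_lt_0_compat; lra. }
    destruct (t_small p Hd dl Hdl) as [N3 HN3].
    destruct (rt_small p mu Hd Hm (eps / (3 * C))) as [N4 HN4].
    { unfold C; apply Rdiv_lt_0_compat; lra. }
    exists (Nat.max (Nat.max N1 N2) (Nat.max K (Nat.max N3 N4))). intros r Hr Hpr.
    specialize (HN1 r ltac:(lia) Hpr).
    assert (HN2r := HN2 r ltac:(lia)). assert (HN2R := HN2 (S r) ltac:(lia)).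
    specialize (HN3 r ltac:(lia)). specialize (HN4 (S r) ltac:(lia)).
    assert (HmuK := HK K (le_n K)).
    rewrite cc_S. fold cm in HN1, HN2r, HN2R |- *.
    set (P := p (S r)) in *.
    set (s := Q p (S m) (S r)) in *. set (s' := Q p (S m) r) in *.
    assert (Hs : 0 <= s <= 1) by (apply Q_range; auto).
    assert (Hs' : 0 <= s' <= 1) by (apply Q_range; auto).
    assert (Hss : s' <= s) by (apply Q_mono; auto).
    change (Q p (S (S m)) (S r)) with (G p (S r) s). change (Q p (S (S m)) r) with (G p r s').
    rewrite G_S. fold P.
    assert (LB := lemB p mu K r s s' (proj1 Hd) Hm ltac:(lia) ltac:(lra) ltac:(lra)).
    set (X := G p r s - G p r s') in *.
    set (Dd := s - s') in *.
    assert (HD0 : 0 <= Dd) by (unfold Dd; lra).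
    apply Rabs_inv2 in HN1. apply Rabs_inv2 in HN2r. apply Rabs_inv2 in HN2R.
    assert (HDC : Dd <= C * P) by (unfold C; nra).
    set (tr := Fbar p r) in *. set (tR := Fbar p (S r)) in *.
    assert (Htr : 0 <= tr) by (apply t_nonneg; auto).
    assert (HtR : 0 <= tR) by (apply t_nonneg; auto).
    assert (Hs'C : 1 - s' <= C * tr) by (unfold C; lra).
    assert (HKs : INR K * mu * (1 - s') <= eta).
    { assert (INR K * mu * (1 - s') <= INR K * mu * (C * dl)).
      { apply Rmult_le_compat_l; auto. assert (C * tr <= C * dl) by (apply Rmult_le_compat_l; unfold C; lra). lra. }
      assert (HCdl : INR K * mu * (C * dl) = eta * (INR K * mu / (INR K * mu + 1))).
      { unfold dl. field. split; unfold C; lra. }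
      assert (INR K * mu / (INR K * mu + 1) <= 1) by (apply frac_le1; auto).
      nra. }
    assert (HX : Rabs (X - mu * Dd) <= 2 * eta * Dd).
    { apply Rabs_le. split.
      - assert (Dd * (mu - eta - eta) <= Dd * (mup p K - INR K * mu * (1 - s'))).
        { apply Rmult_le_compat_l; lra. }
        nra.
      - assert (0 <= eta * Dd) by (apply Rmult_le_pos; lra). nra. }
    assert (Hpow : 0 <= P * (1 - s ^ S r) <= eps / 3 * P).
    { assert (Bn := bernoulli s (S r) Hs).
      assert (s ^ S r <= 1) by (apply pow_le_one; auto).
      assert (Hsr : 1 - s <= C * tR) by (unfold C; lra).
      assert (INR (S r) * (1 - s) <= INR (S r) * (C * tR)).
      { apply Rmult_le_compat_l; [apply pos_INR|lra]. }
      assert (INR (S r) * (C * tR) <= eps / 3).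
      { replace (INR (S r) * (C * tR)) with (C * (INR (S r) * tR)) by ring.
        apply Rle_trans with (C * (eps / (3 * C))).
        - apply Rmult_le_compat_l; lra.
        - unfold C. right. field. lra. }
      split; [apply Rmult_le_pos; lra|].
      rewrite Rmult_comm. apply Rmult_le_compat_r; lra. }
    replace (G p r s + P * s ^ S r - G p r s' - (1 + mu * cm) * P)
      with ((X - mu * Dd) + mu * (Dd - cm * P) - P * (1 - s ^ S r)) by (unfold X, Dd; ring).
    unfold Rminus at 1. eapply Rle_trans; [apply Rabs_triang|].
    rewrite Rabs_Ropp, (Rabs_right (P * _)) by lra.
    eapply Rle_trans; [apply Rplus_le_compat_r; apply Rabs_triang|].
    rewrite Rabs_mult, (Rabs_right mu) by lra.
    assert (mu * Rabs (Dd - cm * P) <= mu * (e1 * P)).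
    { apply Rmult_le_compat_l; [lra|]. apply Rabs_le. lra. }
    assert (mu * (e1 * P) <= eps / 3 * P).
    { assert (mu * e1 <= eps / 3).
      { apply Rle_trans with (mu * (eps / (3 * (mu + 1)))). apply Rmult_le_compat_l; lra.
        replace (mu * (eps / (3 * (mu + 1)))) with (eps / 3 * (mu / (mu + 1))) by (field; lra).
        assert (mu / (mu + 1) <= 1) by (apply frac_le1; lra).
        nra. }
      nra. }
    assert (2 * eta * Dd <= eps / 3 * P).
    { assert (2 * eta * Dd <= 2 * eta * (C * P)) by (apply Rmult_le_compat_l; lra).
      replace (2 * eta * (C * P)) with (eps / 3 * P) in H1 by (unfold eta; field; unfold C; lra).
      lra. }
    lra.
Qed.

Lemma ratio_bound x c P eps : 1 <= c -> 0 < P -> 0 < eps ->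
  Rabs (x - c * P) <= (eps * c / 2) * P -> Rabs (x / (c * P) - 1) < eps.
Proof.
  intros Hc HP He H.
  replace (x / (c * P) - 1) with ((x - c * P) * / (c * P)) by (field; lra).
  rewrite Rabs_mult, Rabs_inv, (Rabs_right (c * P)) by nra.
  assert (0 < / (c * P)) by (apply Rinv_0_lt_compat; nra).
  apply Rle_lt_trans with ((eps * c / 2) * P * / (c * P)).
  - apply Rmult_le_compat_r; lra.
  - replace ((eps * c / 2) * P * / (c * P)) with (eps / 2) by (field; lra). lra.
Qed.

Theorem theorem2p3 (p : nat -> R) (mu : R) (n : nat)
  (Hp : is_distribution p) (Hmu : has_mean p mu) (Hmu0 : 0 < mu)
  (Hunb : unbounded p) :
  let c := sum_f_R0 (fun i => mu ^ i) n in
  (forall eps : R, 0 < eps -> exists N : nat, forall r : nat, (N <= r)%nat ->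
     0 < p r -> Rabs (P_Meq p n r / (c * p r) - 1) < eps) /\
  (forall eps : R, 0 < eps -> exists N : nat, forall r : nat, (N <= r)%nat ->
     Rabs (P_Mgt p n r / (c * Fbar p r) - 1) < eps).
Proof.
  intros c. assert (Hc : 1 <= c) by (apply (cc_pos mu n Hmu0)).
  split.
  - intros eps He.
    destruct (claim1 p mu n Hp Hmu Hmu0 (eps * c / 2) ltac:(nra)) as [N HN].
    exists (S N). intros r Hr Hpr. destruct r as [|r']; [lia|].
    apply ratio_bound; auto.
    unfold P_Meq. rewrite !P_Mle_Q. apply HN; auto. lia.
  - intros eps He.
    destruct (claim2 p mu n Hp Hmu Hmu0 (eps * c / 2) ltac:(nra)) as [N HN].
    exists N. intros r Hr.
    apply ratio_bound; auto. apply t_pos; auto.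
    unfold P_Mgt. rewrite P_Mle_Q. apply HN; auto.
Qed.
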